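(* For all positive integers $m_1,\dots,m_S$, $$B(m_1,\dots,m_S)=\sum_{\ell_1=0}^{m_1-1}\cdots\sum_{\ell_S=0}^{m_S-1}\frac{(\ell_1+\dots+\ell_S)!}{\ell_1!\cdots\ell_S!}.$$
   Context: For nonnegative integers $n_1,\dots,n_S$, $E(n_1,\dots,n_S)$ denotes the number of block derangements: $S$ players hold $n_1,\dots,n_S$ distinct cards respectively; all $N=n_1+\dots+n_S$ cards are redealt so that player $j$ again receives exactly $n_j$ cards (only which cards each player gets matters); $E$ counts the deals in which no player receives any card he originally held. Equivalently, $E(n_1,\dots,n_S)$ is the coefficient of $x_1^{n_1}\cdots x_S^{n_S}$ in $\prod_{j=1}^S(x_1+\dots+x_S-x_j)^{n_j}$. By convention $E(0,\dots,0)=1$. For positive integers $m_1,\dots,m_S$, $B(m_1,\dots,m_S)=\sum_{k_1=1}^{m_1}\cdots\sum_{k_S=1}^{m_S}\binom{m_1}{k_1}\cdots\binom{m_S}{k_S}E(k_1-1,\dots,k_S-1)$. *)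

(* Defs.v *)
From mathcomp Require Import all_boot.
Set Implicit Arguments. Unset Strict Implicit. Unset Printing Implicit Defensive.

(* Cards: player j holds the cards (j, a) with a < n j. *)
Definition card_t (S : nat) (n : 'I_S -> nat) : finType :=
  {j : 'I_S & 'I_(n j)}.

Definition block_derangement (S : nat) (n : 'I_S -> nat)
    (f : {ffun card_t n -> 'I_S}) : bool :=
  [forall j : 'I_S, #|[pred c : card_t n | f c == j]| == n j]
  && [forall c : card_t n, f c != tag c].

Definition E (S : nat) (n : 'I_S -> nat) : nat :=
  #|[pred f : {ffun card_t n -> 'I_S} | block_derangement f]|.

(* B(m_1,...,m_S) = sum_{k_j=1}^{m_j} prod_j C(m_j,k_j) E(k_1-1,...,k_S-1);
   we index by l_j = k_j - 1 ranging over 0 <= l_j < m_j, drawn from a common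
   bound 'I_(max_j m_j). *)
Definition B (S : nat) (m : 'I_S -> nat) : nat :=
  \sum_(l : {ffun 'I_S -> 'I_(\max_(j < S) m j)} | [forall j, l j < m j])
     (\prod_(j < S) 'C(m j, (l j).+1)) * E (fun j => nat_of_ord (l j)).

Definition multinom (S : nat) (l : 'I_S -> nat) : nat :=
  (\sum_(j < S) l j)`! %/ \prod_(j < S) (l j)`!.

(* Main.v *)
Require Import Defs.
From mathcomp Require Import all_boot.
From mathcomp Require Import zify.
From Stdlib Require Import FunctionalExtensionality.
Set Implicit Arguments. Unset Strict Implicit. Unset Printing Implicit Defensive.

Lemma hockey k n : \sum_(0 <= a < k) 'C(a, n) = 'C(k, n.+1).
Proof.
elim: k => [|k IH]; first by rewrite big_geq.
by rewrite big_nat_recr //= IH binS.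
Qed.

Lemma box_sum (S M : nat) (m : 'I_S -> nat) (n : 'I_S -> nat)
  (hM : forall j, m j <= M) :
  \sum_(l : {ffun 'I_S -> 'I_M} | [forall j, l j < m j]) \prod_(j < S) 'C(l j, n j)
  = \prod_(j < S) 'C(m j, (n j).+1).
Proof.
have -> : \prod_(j < S) 'C(m j, (n j).+1) =
   \prod_(j < S) \sum_(a : 'I_M | a < m j) 'C(a, n j).
  apply: eq_bigr => j _.
  rewrite -hockey -(big_mkord (fun a => a < m j) (fun a => 'C(a, n j))).
  by rewrite (big_nat_widen _ _ _ _ _ (hM j)) big_mkcondr /=; apply: eq_bigr.
rewrite bigA_distr_big_dep.
apply: eq_bigl => l; apply/forallP/familyP => H j; exact: H.
Qed.

Definition cntT (S N : nat) (q : 'I_S -> nat) : nat :=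
  \sum_(w : N.-tuple 'I_S) [forall j, count_mem j w == q j].

Lemma sum_tupleS (T : finType) N (F : N.+1.-tuple T -> nat) :
  \sum_(w : N.+1.-tuple T) F w = \sum_(x : T) \sum_(w : N.-tuple T) F [tuple of x :: w].
Proof.
rewrite pair_big /=.
rewrite (reindex (fun p : T * N.-tuple T => [tuple of p.1 :: p.2])) //=.
exists (fun w : N.+1.-tuple T => (thead w, [tuple of behead w])).
  by move=> [x w] _ /=; congr (_, _); apply: val_inj.
move=> w _; apply: val_inj => /=.
by case: w => [[|a s] //= _].
Qed.

Lemma cntT_fact S N (q : 'I_S -> nat) : \sum_j q j = N -> cntT N q * \prod_j (q j)`! = N`!.
Proof.
elim: N q => [|N IH] q hq.
  have q0 : forall j, q j = 0.
    move=> j; apply/eqP; rewrite -leqn0 -hq (bigD1 j) //=; exact: leq_addr.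
  have -> : cntT 0 q = 1.
    rewrite /cntT (eq_bigr (fun _ => 1)); last first.
      move=> w _; rewrite (tuple0 w); apply/eqP; rewrite eqb1; apply/forallP => j.
      by rewrite q0.
    by rewrite sum_nat_const card_tuple expn0.
  rewrite big1 // => j _; by rewrite q0.
rewrite /cntT sum_tupleS.
pose qx (x : 'I_S) := fun j => q j - (x == j).
have E1 : forall x, \sum_(w : N.-tuple 'I_S) [forall j, count_mem j [tuple of x :: w] == q j]
   = if 0 < q x then cntT N (qx x) else 0.
  move=> x; rewrite /cntT; case: ifP => hx; last first.
    apply: big1 => w _; apply/eqP; rewrite eqb0; apply/negP => /forallP /(_ x) /=.
    rewrite eqxx add1n => /eqP hqx; by rewrite -hqx in hx.
  apply: eq_bigr => w _; congr nat_of_bool.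
  apply/forallP/forallP => H j; move: (H j) => /= /eqP Hj; apply/eqP.
    by rewrite /qx -Hj addKn.
  rewrite /= Hj /qx subnKC //; case: eqP => [<-|] //.
rewrite (eq_bigr _ (fun x _ => E1 x)) big_distrl /=.
transitivity (\sum_(x < S) q x * N`!); last first.
  have -> : \sum_(i < S) q i * N`! = (\sum_(i < S) q i) * N`! by rewrite big_distrl.
  by rewrite hq factS.
apply: eq_bigr => x _; case: ifP => hx; last by move: hx; case: (q x).
  have Hs : \sum_j qx x j = N.
    move: hq; rewrite (bigD1 x) //= (bigD1 x (P := predT)) //= /qx eqxx.
    have -> : \sum_(i < S | i != x) (q i - (x == i)) = \sum_(i < S | i != x) q i.
      by apply: eq_bigr => j hj; rewrite eq_sym (negbTE hj) subn0.
    change (nat_of_bool true) with 1; move: hx; set s := \sum_(i < S | i != x) q i; lia.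
  rewrite -(IH _ Hs) (bigD1 x) //= [in RHS](bigD1 x) //= /qx eqxx.
  have -> : \prod_(i < S | i != x) (q i - (x == i))`! = \prod_(i < S | i != x) (q i)`!.
    by apply: eq_bigr => j hj; rewrite eq_sym (negbTE hj) subn0.
  move: hx; case: (q x) => // k _; rewrite factS subn1 /= -mulnA mulnCA.
by [].
Qed.


Lemma count_enum (T : finType) (a : pred T) : count a (enum T) = #|a|.
Proof. by rewrite cardE -size_filter enumT -deprecated_filter_index_enum. Qed.

Definition FibCnt (S : nat) (T : finType) (q : 'I_S -> nat) : nat :=
  #|[pred f : {ffun T -> 'I_S} | [forall j, #|[pred c | f c == j]| == q j]]|.

Lemma FibCnt_cntT S (T : finType) (q : 'I_S -> nat) : FibCnt T q = cntT #|T| q.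
Proof.
rewrite /FibCnt -sum1_card /cntT big_mkcond /=.
rewrite (reindex (@Finfun T 'I_S)) /=; last first.
  by exists fgraph => x _; [rewrite FinfunK | rewrite fgraphK].
apply: eq_bigr => w _; rewrite inE.
have -> : [forall j, #|[pred c | Finfun w c == j]| == q j] = [forall j, count_mem j w == q j].
  apply: eq_forallb => j.
  by rewrite -[w in RHS]FinfunK -codom_ffun /codom /image_mem count_map count_enum.
by case: [forall j, _].
Qed.

Definition own (S : nat) (T : finType) (t : T -> 'I_S) (A : {set T}) (j : 'I_S) : nat :=
  #|A :&: [set c | t c == j]|.
Definition tau (S : nat) (T : finType) (t : T -> 'I_S) (A : {set T})
   (x : card_t (own t A)) : T :=
  @enum_val T (A :&: [set c | t c == tag x]) (tagged x).
Lemma tauP S T t A x : @tau S T t A x \in A :&: [set c | t c == tag x].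
Proof. exact: enum_valP. Qed.
Lemma tau_in S T t A x : @tau S T t A x \in A.
Proof. by move: (tauP x); rewrite inE => /andP []. Qed.
Lemma tau_own S T t A x : t (@tau S T t A x) = tag x.
Proof. by move: (tauP x); rewrite !inE => /andP [] _ /eqP. Qed.
Lemma tau_inj S T t A : injective (@tau S T t A).
Proof.
move=> x y H.
have Ht : tag x = tag y by rewrite -!(tau_own (A := A)) H.
move: H; case: x Ht => j i; case: y => k i' /= Ht; subst k.
by rewrite /tau /= => /enum_val_inj ->.
Qed.

Lemma sumcount S (T : finType) (t : T -> 'I_S) (A : {set T}) :
  #|A| = \sum_j own t A j.
Proof.
rewrite -sum1_card (partition_big t predT) //=; apply: eq_bigr => j _.
by rewrite sum1dep_card /own; apply: eq_card => c; rewrite !inE.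
Qed.

Lemma tagcount S (n : 'I_S -> nat) j : #|[set c : card_t n | tag c == j]| = n j.
Proof.
have -> : [set c : card_t n | tag c == j] =
   [set (Tagged (fun k => 'I_(n k)) i : card_t n) | i : 'I_(n j)].
  apply/setP => c; rewrite inE; apply/eqP/imsetP => [<-|[i _ ->] //].
  by exists (tagged c) => //; case: c.
rewrite card_imset ?card_ord // => i1 i2; exact: eq_from_Tagged.
Qed.

Lemma card_card_t S (n : 'I_S -> nat) : #|card_t n| = \sum_j n j.
Proof.
rewrite -cardsT (sumcount tag); apply: eq_bigr => j _.
by rewrite /own setTI tagcount.
Qed.

Lemma tau_img S T t A : [set @tau S T t A x | x in card_t (own t A)] = A.
Proof.
apply/eqP; rewrite eqEcard; apply/andP; split.
  by apply/subsetP => c /imsetP [x _ ->]; exact: tau_in.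
by rewrite card_imset; [rewrite card_card_t -sumcount | exact: tau_inj].
Qed.

Lemma tau_pred (S : nat) (T : finType) (t : T -> 'I_S) (A : {set T}) (P : pred T) :
  A :&: [set c | P c] = [set @tau S T t A x | x in [set x | P (tau x)]].
Proof.
apply/setP => c; rewrite !inE; apply/andP/imsetP => [[cA Pc]|[x]].
  rewrite -(tau_img t A) in cA; case/imsetP: cA => x _ cx.
  by exists x => //; rewrite inE -cx.
by rewrite inE => Px ->; split => //; exact: tau_in.
Qed.

Definition Der (S : nat) (T : finType) (t : T -> 'I_S) (A : {set T}) (q : 'I_S -> nat) : nat :=
  #|[pred f : {ffun T -> 'I_S} | [forall c, if c \in A then f c != t c else f c == t c]
      && [forall j, #|A :&: [set c | f c == j]| == q j]]|.

Lemma count_tau (S : nat) (T : finType) (t : T -> 'I_S) (A : {set T}) (f : T -> 'I_S) j :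
  #|[pred x : card_t (own t A) | f (tau x) == j]| = #|A :&: [set c | f c == j]|.
Proof.
rewrite (tau_pred t A (fun c => f c == j)) card_imset; last exact: tau_inj.
by apply: eq_card => x; rewrite !inE.
Qed.

Lemma Der_E (S : nat) (T : finType) (t : T -> 'I_S) (A : {set T}) :
  Der t A (own t A) = E (own t A).
Proof.
set n := own t A.
pose DS := [set f : {ffun T -> 'I_S} | [forall c, if c \in A then f c != t c else f c == t c]
      && [forall j, #|A :&: [set c | f c == j]| == n j]].
pose ES := [set g : {ffun card_t n -> 'I_S} | block_derangement g].
pose Psi (f : {ffun T -> 'I_S}) : {ffun card_t n -> 'I_S} := [ffun x => f (tau x)].
have -> : Der t A n = #|DS| by apply: eq_card => f; rewrite !inE.
have -> : E n = #|ES| by apply: eq_card => g; rewrite !inE.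
have inj : {in DS &, injective Psi}.
  move=> f1 f2; rewrite !inE => /andP [/forallP H1 _] /andP [/forallP H2 _] H.
  apply/ffunP => c; move: (H1 c) (H2 c); case cA: (c \in A).
    rewrite -(tau_img t A) in cA; case/imsetP: cA => x _ ->.
    by move=> _ _; move/ffunP: H => /(_ x); rewrite !ffunE.
  by move=> /eqP -> /eqP ->.
rewrite -(card_in_imset inj); apply: eq_card => g.
apply/imsetP/idP => [[f]|].
  rewrite !inE => /andP [/forallP H1 /forallP H2] ->.
  rewrite /block_derangement; apply/andP; split; apply/forallP.
    move=> j; have -> : #|[pred c : card_t n | [ffun x => f (tau x)] c == j]| =
              #|[pred x : card_t n | f (tau x) == j]|.
      by apply: eq_card => x; rewrite !inE ffunE.
    by rewrite count_tau H2.
  by move=> x; rewrite ffunE; move: (H1 (tau x)); rewrite tau_in tau_own.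
rewrite inE => /andP [/forallP G1 /forallP G2].
pose f := [ffun c => if [pick x | tau x == c] is Some x then g x else t c].
have fE : forall x, f (tau x) = g x.
  move=> x; rewrite ffunE; case: pickP => [y /eqP /tau_inj -> //|/(_ x)].
  by rewrite eqxx.
exists f; last by apply/ffunP => x; rewrite ffunE fE.
rewrite inE; apply/andP; split; apply/forallP.
  move=> c; case cA: (c \in A).
    rewrite -(tau_img t A) in cA; case/imsetP: cA => x _ ->.
    by rewrite fE tau_own G2.
  rewrite ffunE; case: pickP => [y /eqP Hy|_]; last by [].
  by move: cA; rewrite -Hy tau_in.
move=> j; rewrite -(count_tau t A).
have -> : #|[pred x : card_t n | f (tau x) == j]| = #|[pred x : card_t n | g x == j]|.
  by apply: eq_card => x; rewrite !inE fE.
exact: G1.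
Qed.







Lemma cards_split (T : finType) (A B : {set T}) : #|B| = #|A :&: B| + #|~: A :&: B|.
Proof. by rewrite -(cardsID A B) setDE [B :&: A]setIC [B :&: ~: A]setIC. Qed.

Lemma partition_fix S (T : finType) (t : T -> 'I_S) :
  FibCnt T (own t setT) = \sum_(A : {set T}) Der t A (own t A).
Proof.
rewrite /FibCnt -sum1_card.
rewrite (partition_big (fun f : {ffun T -> 'I_S} => [set c | f c != t c]) predT) //=.

apply: eq_bigr => A _; rewrite sum1_card /Der; apply: eq_card => f; rewrite !inE.

have HX : ([set c | f c != t c] == A) = [forall c, if c \in A then f c != t c else f c == t c].
  apply/eqP/forallP => [<- c|H]; first by rewrite inE; case: eqP.
  apply/setP => c; rewrite inE; move: (H c); case: (c \in A) => //; by move/eqP=> ->; rewrite eqxx.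

rewrite unfold_in /= !inE andbC HX; case Hf: [forall c, _] => //=.
apply: eq_forallb => j.
have E1 : #|[pred c | f c == j]| = #|[set c | f c == j]| by apply: eq_card => c; rewrite inE.
have E2 : ~: A :&: [set c | f c == j] = ~: A :&: [set c | t c == j].
  apply/setP => c; rewrite !inE; move/forallP: Hf => /(_ c).
  by case: (c \in A) => //= /eqP ->.
rewrite E1 (cards_split A) E2 /own setTI (cards_split A [set c | t c == j]).
by rewrite eqn_add2r.
Qed.


Lemma count_sets (S : nat) (T : finType) (t : T -> 'I_S) (n : 'I_S -> nat) :
  #|[set A : {set T} | [forall j, own t A j == n j]]| = \prod_j 'C(own t setT j, n j).
Proof.
pose Bj j := [set c | t c == j].
pose F := fun j => [pred X : {set T} | (X \subset Bj j) && (#|X| == n j)].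
pose phi (A : {set T}) : {ffun 'I_S -> {set T}} := [ffun j => A :&: Bj j].
have phi_inj : injective phi.
  move=> A1 A2 H; apply/setP => c.
  have := congr1 (fun g : {ffun 'I_S -> {set T}} => c \in g (t c)) H.
  by rewrite /= !ffunE !inE eqxx !andbT.
rewrite -(card_imset _ phi_inj).
have -> : \prod_j 'C(own t setT j, n j) = #|family F|.
  rewrite card_family foldrE big_image /=; apply: eq_bigr => j _.
  rewrite /own setTI -cards_draws; apply: eq_card => X; rewrite !inE.
  by [].
apply: eq_card => g; apply/imsetP/familyP => [[A]|H].
  rewrite inE => /forallP HA -> j; rewrite !inE ffunE subsetIr /=.
  exact: HA.
exists [set c | c \in g (t c)].
  rewrite inE; apply/forallP => j; move: (H j); rewrite !inE => /andP [sub cardg].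
  rewrite /own -(eqP cardg); apply/eqP; apply: eq_card => c; rewrite !inE; apply/andP/idP => [[cg /eqP <-] //|cj].
  have tj : t c = j by move/subsetP: sub => /(_ c cj); rewrite inE => /eqP.
  by rewrite tj cj.
apply/ffunP => j; rewrite ffunE; move: (H j); rewrite !inE => /andP [sub _].
apply/setP => c; rewrite !inE; apply/idP/andP => [cj|[cg /eqP <-] //].
have tj : t c = j by move/subsetP: sub => /(_ c cj); rewrite inE => /eqP.
by rewrite tj cj.
Qed.

Lemma multinom_FibCnt (S : nat) (p : 'I_S -> nat) : multinom p = FibCnt (card_t p) p.
Proof.
rewrite FibCnt_cntT card_card_t /multinom.
rewrite -(cntT_fact (erefl (\sum_j p j))) mulnK //.
by apply: prodn_gt0 => j; exact: fact_gt0.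
Qed.

Lemma own_tag_setT (S : nat) (p : 'I_S -> nat) : own (tag : card_t p -> 'I_S) setT = p.
Proof. by apply: functional_extensionality => j; rewrite /own setTI tagcount. Qed.

Lemma stepA (S M : nat) (p : 'I_S -> nat) (hp : forall j, p j < M) :
  multinom p = \sum_(n : {ffun 'I_S -> 'I_M}) (\prod_(j < S) 'C(p j, n j)) * E (fun j => nat_of_ord (n j)).
Proof.
rewrite multinom_FibCnt -{2}(own_tag_setT p) partition_fix.
under eq_bigr do rewrite Der_E.
set t := (tag : card_t p -> 'I_S).
have ownlt : forall (A : {set card_t p}) j, own t A j < M.
  move=> A j; apply: leq_ltn_trans (hp j).
  rewrite -{2}(own_tag_setT p) /own setTI; apply: subset_leq_card; exact: subsetIr.
transitivity (\sum_(n : {ffun 'I_S -> 'I_M})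
    \sum_(A : {set card_t p} | [forall j, own t A j == n j]) E (own t A)).
  rewrite [RHS](exchange_big_dep predT) //=; apply: eq_bigr => A _.
  rewrite (big_pred1 [ffun j => Ordinal (ownlt A j)]) //.
  move=> n /=; apply/forallP/eqP => [H|-> j]; last by rewrite ffunE.
  by apply/ffunP => j; apply: val_inj; rewrite ffunE /=; apply/esym/eqP.
apply: eq_bigr => n _.
have Hc := count_sets t (fun j => nat_of_ord (n j)); rewrite /t own_tag_setT in Hc.
rewrite -Hc -sum1_card big_distrl /=.
apply: eq_big => [A|A HA]; first by rewrite inE.
rewrite mul1n; congr E; apply: functional_extensionality => j.
by move/forallP: HA => /(_ j) /eqP.
Qed.

Theorem mainTheorem10 (S : nat) (m : 'I_S -> nat)
    (hm : forall j : 'I_S, 0 < m j) :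
  B m =
  \sum_(l : {ffun 'I_S -> 'I_(\max_(j < S) m j)} | [forall j, l j < m j])
     multinom (fun j => nat_of_ord (l j)).
Proof.
set M := \max_(j < S) m j.
have hM : forall j, m j <= M by move=> j; exact: (leq_bigmax j).
transitivity (\sum_(l : {ffun 'I_S -> 'I_M} | [forall j, l j < m j])
   \sum_(n : {ffun 'I_S -> 'I_M}) (\prod_(j < S) 'C(l j, n j)) * E (fun j => nat_of_ord (n j))); last first.
  by apply: eq_bigr => l _; rewrite (stepA (M := M)).
rewrite exchange_big /=.
under [RHS]eq_bigr do rewrite -big_distrl /= box_sum //.
rewrite /B (bigID (fun n : {ffun 'I_S -> 'I_M} => [forall j, n j < m j]) predT) /=.
rewrite [X in _ = _ + X]big1 ?addn0 //.
move=> n /forallPn [j]; rewrite -leqNgt => hj.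
by rewrite (bigD1 j) //= bin_small // ltnS.
Qed.
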